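(* Let $K$ be an algebraically closed field of characteristic $\ne2$, $G=\mathrm{PGL}_n(K)$, $n=2^st$ with $t$ odd and $s,t\ge1$. Let $1\le r\le s$, $n=2^rk$, and let $D=D_r\times (H\otimes I_{2^r})$, where $H$ is either trivial or a toral elementary abelian $2$-subgroup of $\mathrm{PGL}_k(K)$ with $C_{\mathrm{PGL}_k(K)}(H)$ connected. Then $C_G(D)=\langle C_G(D)^\circ,\bar B_0,\dots,\bar B_{r-1}\rangle=C_G(D)^\circ\cdot B_r$.
   Context: $C_G(D)^\circ$ is the identity component. Notation ($p=2$): for $0\le s'\le r-1$, $\sigma_{s'}$ is the permutation of $\{1,\dots,2^r\}$ with $\sigma_{s'}(i)=i+2^{s'}$ if $i\equiv 1,\dots,2^{s'}\pmod{2^{s'+1}}$ and $\sigma_{s'}(i)=i-2^{s'}$ otherwise; $A_{s'}$ is diagonal $2^r\times2^r$ with $(A_{s'})_{ii}=(-1)^{\lfloor(i-1)/2^{s'}\rfloor}$; $B_{s'}$ is the permutation matrix with $(B_{s'})_{ij}=1$ iff $\sigma_{s'}(i)=j$. $\bar A_{s'},\bar B_{s'}\in\mathrm{PGL}_n(K)$ are the images of $I_k\otimes A_{s'}$, $I_k\otimes B_{s'}$. $D_r=\langle\bar A_0,\dots,\bar A_{r-1}\rangle$, $B_r=\langle\bar B_0,\dots,\bar B_{r-1}\rangle$. $H\otimes I_{2^r}$ is the image of $\{h\otimes I_{2^r}:h\in H\}$ (Kronecker product). Toral means contained in a maximal torus. *)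

(* Defs.v *)
From HB Require Import structures.
From mathcomp Require Import all_boot all_order all_algebra.
From mathcomp Require Import mpoly.
From mathcomp Require Import mxtens.

Set Implicit Arguments.
Unset Strict Implicit.
Unset Printing Implicit Defensive.

Import GRing.Theory.
Local Open Scope ring_scope.

(* PGL_m(K) = GL_m(K)/K^*.  A subset of PGL_m(K) is represented by its full   *)
(* preimage in GL_m(K), i.e. by a set of invertible m x m matrices which is  *)
(* closed under multiplication by nonzero scalars.                           *)

Section Defs.
Variable K : fieldType.

Definition scal_closed m (X : 'M[K]_m -> Prop) :=
  forall (c : K) (A : 'M[K]_m), c != 0 -> X A -> X (c *: A).

Inductive gen_grp m (S : 'M[K]_m -> Prop) : 'M[K]_m -> Prop :=
| gen_in   : forall A, S A -> gen_grp S A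
| gen_one  : gen_grp S 1%:M
| gen_mul  : forall A B, gen_grp S A -> gen_grp S B -> gen_grp S (A *m B)
| gen_inv  : forall A, gen_grp S A -> gen_grp S (invmx A).

(* preimage in GL_m of the centralizer in PGL_m of (the image of) S:
   g centralizes x in PGL iff g x g^{-1} = c x for some scalar c *)
Definition pcent m (S : 'M[K]_m -> Prop) : 'M[K]_m -> Prop :=
  fun g => g \in unitmx /\
    forall x, S x -> exists c : K, g *m x = c *: (x *m g).

Definition zclosed m (Z : 'M[K]_m -> Prop) :=
  exists P : {mpoly K[m * m]} -> Prop,
    forall A, Z A <-> (forall p, P p -> p.@[fun i => mxvec A 0 i] = 0).

(* closed subsets of PGL_m(K) (quotient topology of the Zariski topology of
   GL_m(K), GL_m carrying the subspace topology from M_m), given by their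
   preimages in GL_m *)
Definition pclosed m (F : 'M[K]_m -> Prop) :=
  scal_closed F /\
  exists Z, zclosed Z /\ forall A, F A <-> (A \in unitmx /\ Z A).

Definition pconnected m (X : 'M[K]_m -> Prop) :=
  ~ exists F1 F2 : 'M[K]_m -> Prop,
      [/\ pclosed F1 /\ pclosed F2,
          (forall A, X A -> F1 A \/ F2 A),
          (exists A, X A /\ F1 A),
          (exists A, X A /\ F2 A) &
          (forall A, X A -> F1 A -> F2 A -> False)].

(* preimage of the identity component of (the image in PGL_m of) X:
   union of all connected subsets of PGL_m contained in X containing 1 *)
Definition pidcomp m (X : 'M[K]_m -> Prop) : 'M[K]_m -> Prop :=
  fun A => exists Y : 'M[K]_m -> Prop,
    [/\ scal_closed Y, (forall B, Y B -> X B), Y 1%:M, pconnected Y & Y A].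

(* the matrices A_{s'} and B_{s'} (0-based indices: paper's i is i0+1) *)
Definition sigma_idx (s' i0 : nat) : nat :=
  if odd (i0 %/ 2 ^ s') then (i0 - 2 ^ s')%N else (i0 + 2 ^ s')%N.

Definition Amx (r s' : nat) : 'M[K]_(2 ^ r) :=
  \matrix_(i, j) (if i == j then (-1) ^+ (i %/ 2 ^ s') else 0).

Definition Bmx (r s' : nat) : 'M[K]_(2 ^ r) :=
  \matrix_(i, j) (if sigma_idx s' i == j then 1 else 0).

Definition Abar (k r s' : nat) : 'M[K]_(k * 2 ^ r) := tensmx (1%:M : 'M[K]_k) (Amx r s').
Definition Bbar (k r s' : nat) : 'M[K]_(k * 2 ^ r) := tensmx (1%:M : 'M[K]_k) (Bmx r s').

(* preimage in GL_n of D = D_r x (H \otimes I_{2^r}), where Hpre is the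
   preimage of H in GL_k *)
Definition Dpre (k r : nat) (Hpre : 'M[K]_k -> Prop) : 'M[K]_(k * 2 ^ r) -> Prop :=
  gen_grp (fun x =>
    (exists c : K, c != 0 /\ x = c%:M)
    \/ (exists s', (s' < r)%N /\ x = Abar k r s')
    \/ (exists h, Hpre h /\ x = tensmx h (1%:M : 'M[K]_(2 ^ r)))).

Definition is_pgl_subgroup m (Hpre : 'M[K]_m -> Prop) :=
  [/\ (forall h, Hpre h -> h \in unitmx),
      Hpre 1%:M,
      (forall h1 h2, Hpre h1 -> Hpre h2 -> Hpre (h1 *m h2)),
      (forall h, Hpre h -> Hpre (invmx h)) &
      scal_closed Hpre].

Definition pgl_trivial m (Hpre : 'M[K]_m -> Prop) :=
  forall h, Hpre h -> exists c : K, h = c%:M.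

Definition pgl_elem_ab2 m (Hpre : 'M[K]_m -> Prop) :=
  (forall h1 h2, Hpre h1 -> Hpre h2 -> exists c : K, h1 *m h2 = c *: (h2 *m h1))
  /\ (forall h, Hpre h -> exists c : K, h *m h = c%:M).

(* toral: contained in a maximal torus of PGL_m; the maximal tori of PGL_m
   are the images of the maximal tori g Diag g^{-1} of GL_m *)
Definition pgl_toral m (Hpre : 'M[K]_m -> Prop) :=
  exists g : 'M[K]_m, g \in unitmx /\
    forall h, Hpre h -> is_diag_mx (g *m h *m invmx g).

End Defs.

(* Main.v *)
Require Import Defs.
From HB Require Import structures.
From mathcomp Require Import all_boot all_order all_algebra.
From mathcomp Require Import mpoly mxtens.
From mathcomp Require Import zify.
From Stdlib Require Import Classical.
Import GRing.Theory.
Set Implicit Arguments.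
Unset Strict Implicit.

Lemma divX_ge (Y v j i : nat) : v < 2^j -> j <= i -> (Y * 2^j + v) %/ 2^i = Y %/ 2^(i-j).
Proof.
move=> vj ji; rewrite -{1}(subnKC ji) expnD divnMA divnMDl ?expn_gt0 //.
by rewrite (divn_small vj) addn0. 
Qed.

Lemma divX_lt (Y v j i : nat) : i < j -> (Y * 2^j + v) %/ 2^i = Y * 2^(j-i) + v %/ 2^i.
Proof.
move=> ij; rewrite -{1}(subnK (ltnW ij)) expnD mulnA divnMDl ?expn_gt0 //.
Qed.

Lemma divmodX (Y v P : nat) : v < P -> (Y * P + v) %/ P = Y /\ (Y * P + v) %% P = v.
Proof.
move=> vP; have P0 : 0 < P by apply: leq_ltn_trans vP.
by rewrite divnMDl // divn_small // addn0 modnMDl modn_small.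
Qed.

Definition sflip y := if odd y then y.-1 else y.+1.

Lemma sigma_split j x : sigma_idx j x = sflip (x %/ 2^j) * 2^j + x %% 2^j.
Proof.
have := divn_eq x (2^j); rewrite /sigma_idx /sflip.
move: (x %/ 2^j) (x %% 2^j) => y v ex; rewrite ex.
case: y {ex} => [|y] /=; first by rewrite mul0n add0n mul1n addnC.
case: (odd y) => /=; rewrite ?mulSn; lia.
Qed.

Lemma odd_sflip y : odd (sflip y) = ~~ odd y.
Proof. rewrite /sflip; case ho: (odd y); last by rewrite /= ho. by case: y ho => // y /= /negbTE ->. Qed.

Lemma sflip_half (y d : nat) : 0 < d -> sflip y %/ (2 ^ d) = y %/ (2 ^ d).
Proof.
case: d => // d _; rewrite expnS !divnMA; congr (_ %/ _).
have := odd_double_half y; rewrite /sflip; case: (odd y) => /= e; rewrite -e -!muln2; lia.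
Qed.

Lemma sigma_odd j i x : odd (sigma_idx j x %/ 2^i) = (i == j) (+) odd (x %/ 2^i).
Proof.
have vlt : x %% 2^j < 2^j by rewrite ltn_pmod ?expn_gt0.
have ex := divn_eq x (2^j).
rewrite sigma_split; move: (x %/ 2^j) (x %% 2^j) ex vlt => y v -> vlt.
case: (ltngtP i j) => [ij|ji|->].
- rewrite !divX_lt // !oddD !oddM !oddX /=.
  rewrite (_ : (j - i == 0) = false) ?andbF //.
  by apply/negbTE; rewrite subn_eq0 -ltnNge.
- by rewrite !divX_ge ?(ltnW ji) // sflip_half // subn_gt0.
- by rewrite !divX_ge // subnn expn0 !divn1 odd_sflip.
Qed.

Lemma sflipK y : sflip (sflip y) = y.
Proof.
rewrite /sflip; case ho: (odd y); last by rewrite /= ho.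
by case: y ho => // y /= /negbTE ->.
Qed.

Lemma sigma_inv j x : sigma_idx j (sigma_idx j x) = x.
Proof.
have vlt : x %% 2^j < 2^j by rewrite ltn_pmod ?expn_gt0.
have ex := divn_eq x (2^j).
rewrite (sigma_split j (sigma_idx j x)) sigma_split.
move: (x %/ 2^j) (x %% 2^j) ex vlt => y v -> vlt.
have [-> ->] := divmodX (sflip y) vlt.
by rewrite sflipK.
Qed.

Lemma sigma_lt r j x : j < r -> x < 2^r -> sigma_idx j x < 2^r.
Proof.
move=> jr xr; have vlt : x %% 2^j < 2^j by rewrite ltn_pmod ?expn_gt0.
have eP : 2^r = 2^(r-j) * 2^j by rewrite -expnD subnK // ltnW.
have yM : x %/ 2^j < 2^(r-j) by rewrite ltn_divLR ?expn_gt0 // -eP.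
have Mev : ~~ odd (2^(r-j)) by rewrite oddX /= orbF subn_eq0 -ltnNge jr.
have yM2 : sflip (x %/ 2^j) < 2^(r-j).
  rewrite /sflip; case ho: (odd (x %/ 2^j)).
    exact: leq_ltn_trans (leq_pred _) yM.
  rewrite ltn_neqAle yM andbT; apply/negP => /eqP e.
  by move: Mev; rewrite -e /= ho.
rewrite sigma_split eP; apply: (@leq_trans ((sflip (x %/ 2^j)).+1 * 2^j)).
  by move: vlt; set P := 2 ^ j; set Q := sflip _; rewrite mulSn; lia.
by rewrite leq_mul2r yM2 orbT.
Qed.

Lemma bits_eq r l l' : l < 2^r -> l' < 2^r ->
  (forall i, i < r -> odd (l %/ 2^i) = odd (l' %/ 2^i)) -> l = l'.
Proof.
elim: r l l' => [|r IH] l l'.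
  by rewrite expn0 !ltnS !leqn0 => /eqP -> /eqP ->.
move=> hl hl' hb.
have h0 := hb 0 isT; rewrite expn0 !divn1 in h0.
have e : l %/ 2 = l' %/ 2.
  apply: IH.
  - by rewrite ltn_divLR // -expnSr.
  - by rewrite ltn_divLR // -expnSr.
  - by move=> i ir; rewrite -!divnMA -expnS; apply: hb.
by rewrite (divn_eq l 2) (divn_eq l' 2) e !modn2 h0.
Qed.

Local Open Scope ring_scope.

Section Gen.
Variable K : fieldType.

Definition ucomm n (g x : 'M[K]_n) := exists c : K, g *m x = c *: (x *m g).

Lemma ucomm_mulr n (g x y : 'M[K]_n) : ucomm g x -> ucomm g y -> ucomm g (x *m y).
Proof.
move=> [c hc] [d hd]; exists (c * d).
by rewrite mulmxA hc -scalemxAl -mulmxA hd -scalemxAr scalerA mulmxA.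
Qed.

Lemma ucomm_mull n (g1 g2 x : 'M[K]_n) : ucomm g1 x -> ucomm g2 x -> ucomm (g1 *m g2) x.
Proof.
move=> [c hc] [d hd]; exists (d * c).
by rewrite -mulmxA hd -scalemxAr [g1 *m (x *m _)]mulmxA hc -scalemxAl scalerA mulmxA.
Qed.

Lemma ucomm_invl n (g x : 'M[K]_n) : g \in unitmx -> ucomm g x -> ucomm (invmx g) x.
Proof.
move=> ug [c hc]; have [c0|c0] := eqVneq c 0.
  have x0 : x = 0 by rewrite -[x]mul1mx -(mulVmx ug) -mulmxA hc c0 scale0r mulmx0.
  by exists 0; rewrite x0 mulmx0 scale0r.
exists c^-1.
have e : x *m invmx g = c *: (invmx g *m x).
  by rewrite -[x *m _]mul1mx -(mulVmx ug) -!mulmxA (mulmxA g) hc -scalemxAl -mulmxA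
    mulmxV // mulmx1 scalemxAr.
by rewrite e scalerA mulVf // scale1r.
Qed.

Lemma ucomm_invr n (g x : 'M[K]_n) : g \in unitmx -> ucomm g x -> ucomm g (invmx x).
Proof.
move=> ug [c hc]; case ux: (x \in unitmx); last first.
  by rewrite invmx_out ?inE ?ux //; exists c.
have [c0|c0] := eqVneq c 0.
  have g0 : g = 0 by rewrite -[g]mulmx1 -(mulmxV ux) mulmxA hc c0 scale0r mul0mx.
  by exists 0; rewrite g0 mul0mx mulmx0 scale0r.
exists c^-1.
have e : invmx x *m g = c *: (g *m invmx x).
  by rewrite -[invmx x *m g]mulmx1 -(mulmxV ux) !mulmxA -(mulmxA _ g) hc
    -scalemxAr mulmxA mulVmx // mul1mx scalemxAl.
by rewrite e scalerA mulVf // scale1r.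
Qed.

Lemma ucomm_gen n (g : 'M[K]_n) (S : 'M[K]_n -> Prop) :
  g \in unitmx -> (forall x, S x -> ucomm g x) -> forall x, gen_grp S x -> ucomm g x.
Proof.
move=> ug hS x; elim=> {x} [x /hS //| |x y _ hx _ hy|x _ hx].
- by exists 1; rewrite scale1r mulmx1 mul1mx.
- exact: ucomm_mulr.
- exact: ucomm_invr.
Qed.

Lemma comm_gen n (g : 'M[K]_n) (S : 'M[K]_n -> Prop) :
  (forall x, S x -> g *m x = x *m g) -> forall x, gen_grp S x -> g *m x = x *m g.
Proof.
move=> hS x; elim=> {x} [x /hS //| |x y _ hx _ hy|x _ hx].
- by rewrite mulmx1 mul1mx.
- by rewrite mulmxA hx -mulmxA hy mulmxA.
- case ux: (x \in unitmx); last by rewrite invmx_out ?inE ?ux.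
  rewrite -[invmx x *m g]mulmx1 -(mulmxV ux) !mulmxA -(mulmxA _ g) hx.
  by rewrite mulmxA mulVmx // mul1mx.
Qed.

Lemma pcent_mul n (S : 'M[K]_n -> Prop) g1 g2 : pcent S g1 -> pcent S g2 -> pcent S (g1 *m g2).
Proof.
move=> [u1 h1] [u2 h2]; split; first by rewrite unitmx_mul u1.
move=> x Sx; exact: ucomm_mull (h1 x Sx) (h2 x Sx).
Qed.

Lemma pcent_inv n (S : 'M[K]_n -> Prop) g : pcent S g -> pcent S (invmx g).
Proof.
move=> [u1 h1]; split; first by rewrite unitmx_inv.
move=> x Sx; exact: ucomm_invl (h1 x Sx).
Qed.

Lemma pcent1 n (S : 'M[K]_n -> Prop) : pcent S 1%:M.
Proof. split; first exact: unitmx1. by move=> x _; exists 1; rewrite scale1r mulmx1 mul1mx. Qed.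

End Gen.

Lemma nimpl (P Q : Prop) : ~ (P -> Q) -> P /\ ~ Q.
Proof. by move=> h; split; [apply: NNPP => np; apply: h => /np | move=> q; apply: h]. Qed.

Section Conn.
Variable K : closedFieldType.

Lemma nonroot (P : {poly K}) : P != 0 -> exists t, P.[t] != 0.
Proof.
move=> P0.
have : size (P * 'X + (-1)%:P) != 1%N.
  rewrite size_MXaddC (negbTE P0) /=; rewrite eqSS size_poly_eq0 //.
case/closed_rootP => t /rootP.
rewrite hornerE /= => h; exists t; apply/eqP => e; move: h; rewrite hornerE e mul0r add0r.
by rewrite hornerC => /eqP; rewrite oppr_eq0 oner_eq0.
Qed.

Lemma line_poly N (p : {mpoly K[N]}) (u w : 'I_N -> K) :
  exists q : {poly K}, forall t, q.[t] = p.@[fun i => u i + t * w i].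
Proof.
exists (mmap (fun c : K => c%:P) (fun i => (u i)%:P + (w i)%:P * 'X) p) => t.
rewrite /mmap mevalE -/(horner_eval t _) rmorph_sum; apply: eq_bigr => m _.
rewrite rmorphM /= /mmap1 rmorph_prod /=; congr (_ * _).
  by rewrite /horner_eval hornerC.
apply: eq_bigr => i _; rewrite rmorphXn /= /horner_eval; congr (_ ^+ _).
by rewrite !hornerE mulrC.
Qed.


Lemma line_conn m (Y : 'M[K]_m -> Prop) :
  (forall y, Y y -> y \in unitmx) -> Y 1%:M ->
  (forall y t, Y y -> (1%:M + t *: (y - 1%:M)) \in unitmx -> Y (1%:M + t *: (y - 1%:M))) ->
  pconnected Y.
Proof.
move=> YU Y1 Yl [F1 [F2 [[pc1 pc2] cov [y1 [Yy1 F1y1]] [y2 [Yy2 F2y2]] disj]]].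
case: pc1 => _ [Z1 [[P1 hP1] e1]]; case: pc2 => _ [Z2 [[P2 hP2] e2]].
suff key : forall y, Y y -> (F1 y <-> F1 1%:M).
  by apply: (disj y2 Yy2) => //; apply/(key y2 Yy2)/(key y1 Yy1).
move=> y Yy.
pose phi t := 1%:M + t *: (y - 1%:M) : 'M[K]_m.
have phi0 : phi 0 = 1%:M by rewrite /phi scale0r addr0.
have phi1 : phi 1 = y by rewrite /phi scale1r addrC subrK.
have qP : forall p : {mpoly K[m * m]}, exists q : {poly K},
    forall t, q.[t] = p.@[fun i => mxvec (phi t) 0 i].
  move=> p; have [q hq] := line_poly p (fun i => mxvec 1%:M 0 i) (fun i => mxvec (y - 1%:M) 0 i).
  exists q => t; rewrite hq; apply: meval_eq => i.
  by rewrite /phi [in RHS]linearD /= [in RHS]mxE [mxvec (_ *: _)]linearZ mxE.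
have [d [d0 hd]] : exists d : {poly K}, d != 0 /\ forall t, d.[t] = \det (phi t).
  pose D := \det (map_mx polyC 1%:M + 'X *: map_mx polyC (y - 1%:M)).
  have hd : forall t, D.[t] = \det (phi t).
    move=> t; rewrite /D -/(horner_eval t _) -det_map_mx; congr (\det _).
    apply/matrixP => i j; rewrite !mxE.
    by rewrite [LHS]/(horner_eval t _) /horner_eval !hornerE.
  exists D; split => //; apply/eqP => e; have := hd 0.
  by rewrite e horner0 phi0 det1 => /eqP; rewrite eq_sym oner_eq0.
have Yphi : forall t, d.[t] != 0 -> Y (phi t).
  by move=> t dt; apply: Yl => //; rewrite unitmxE unitfE -hd.
have [allz1|] := classic (forall p, P1 p -> forall t, p.@[fun i => mxvec (phi t) 0 i] = 0).
  have Z1phi : forall t, Z1 (phi t) by move=> t; apply/hP1 => p Pp; exact: allz1.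
  have F1y : F1 y by apply/e1; split; [exact: YU | by rewrite -phi1].
  have F11 : F1 1%:M by apply/e1; split; [exact: unitmx1 | by rewrite -phi0].
  by [].
move=> /not_all_ex_not [p1 H1]; have [P1p1 /not_all_ex_not [t1 nz1]] := nimpl H1.
have [allz2|] := classic (forall p, P2 p -> forall t, p.@[fun i => mxvec (phi t) 0 i] = 0).
  have Z2phi : forall t, Z2 (phi t) by move=> t; apply/hP2 => p Pp; exact: allz2.
  have F2y : F2 y by apply/e2; split; [exact: YU | by rewrite -phi1].
  have F21 : F2 1%:M by apply/e2; split; [exact: unitmx1 | by rewrite -phi0].
  by split=> h; exfalso; [apply: (disj y) | apply: (disj 1%:M)].
move=> /not_all_ex_not [p2 H2]; have [P2p2 /not_all_ex_not [t2 nz2]] := nimpl H2.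
have [q1 hq1] := qP p1; have [q2 hq2] := qP p2.
have q10 : q1 != 0 by apply/eqP => e; apply: nz1; rewrite -hq1 e horner0.
have q20 : q2 != 0 by apply/eqP => e; apply: nz2; rewrite -hq2 e horner0.
have [t] := nonroot (mulf_neq0 (mulf_neq0 d0 q10) q20).
rewrite !hornerM !mulf_eq0 !negb_or => /andP [/andP [dt q1t] q2t].
exfalso; have Yt := Yphi t dt.
case: (cov _ Yt) => [/e1 [_ /hP1 z]|/e2 [_ /hP2 z]].
  by move: q1t; rewrite hq1 (z p1 P1p1) eqxx.
by move: q2t; rewrite hq2 (z p2 P2p2) eqxx.
Qed.

End Conn.

Section Cl.
Variable K : fieldType.

Lemma unit_neq0 m (A : 'M[K]_m) : (0 < m)%N -> A \in unitmx -> A != 0.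
Proof.
case: m A => // m A _ uA; apply/eqP => A0; move: uA; by rewrite A0 unitmxE det0 unitr0.
Qed.

Lemma zclosed_lin m p (M : 'M[K]_(m * m, p)) : zclosed (fun A : 'M[K]_m => mxvec A *m M = 0).
Proof.
exists (fun q => exists j : 'I_p, q = \sum_(l < m * m) M l j *: 'X_l) => A; split.
  move=> h q [j ->]; rewrite (big_morph _ (mevalD _) (meval0 _)).
  have := congr1 (fun v : 'rV[K]_p => v 0 j) h; rewrite !mxE => e.
  apply: (etrans _ e); apply: eq_bigr => l _; by rewrite mevalZ mevalXU mulrC.
move=> h; apply/rowP => j; rewrite !mxE.
have := h _ (ex_intro _ j erefl); rewrite (big_morph _ (mevalD _) (meval0 _)) => e.
apply: (etrans _ e); apply: eq_bigr => l _; by rewrite mevalZ mevalXU mulrC.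
Qed.

Lemma pclosed_comm m (h : 'M[K]_m) (d : K) :
  pclosed (fun A => A \in unitmx /\ A *m h = d *: (h *m A)).
Proof.
split.
  move=> c A c0 [uA e]; split; first by rewrite unitmxZ ?unitfE.
  by rewrite -scalemxAl e scalerA mulrC -scalerA scalemxAr.
exists (fun A : 'M[K]_m => mxvec A *m (lin_mulmxr h - d *: lin_mulmx h) = 0); split.
  exact: zclosed_lin.
move=> A; suff -> : (mxvec A *m (lin_mulmxr h - d *: lin_mulmx h) = 0) <-> (A *m h = d *: (h *m A)) by [].
rewrite mulmxBr -scalemxAr /lin_mulmxr /lin_mulmx !mul_vec_lin /=.
rewrite -linearZ -linearB /=; split.
  move=> e; apply/eqP; rewrite -subr_eq0; apply/eqP.
  by rewrite -[_ - _]mxvecK e linear0.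
by move=> ->; rewrite subrr linear0.
Qed.


Lemma sign_pm m (x h : 'M[K]_m) (a c : K) : (0 < m)%N -> x \in unitmx ->
  h \in unitmx -> h *m h = a%:M -> x *m h = c *: (h *m x) -> c = 1 \/ c = -1.
Proof.
move=> m0 ux uh ha e.
have e2 : x *m (h *m h) = (c ^+ 2) *: ((h *m h) *m x).
  by rewrite mulmxA e -scalemxAl -mulmxA e -scalemxAr scalerA mulmxA expr2.
rewrite ha mul_mx_scalar mul_scalar_mx scalerA in e2.
have a0 : a != 0.
  apply/eqP => a0; have hh : h *m h \in unitmx by rewrite unitmx_mul uh.
  by have := unit_neq0 m0 hh; rewrite ha a0 raddf0 eqxx.
have : (a - c ^+ 2 * a) *: x = 0 by rewrite scalerBl e2 subrr.
move/eqP; rewrite scaler_eq0 (negbTE (unit_neq0 m0 ux)) orbF subr_eq0.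
rewrite -{1}[a]mul1r (inj_eq (mulIf a0)) eq_sym sqrf_eq1.
by case/orP => /eqP ->; [left|right].
Qed.

Lemma pcent_comm m (Hpre : 'M[K]_m -> Prop) (h0 : 'M[K]_m) (a : K) :
  2%:R != 0 :> K -> (0 < m)%N -> Hpre h0 -> h0 \in unitmx -> h0 *m h0 = a%:M ->
  pconnected (pcent Hpre) -> forall g, pcent Hpre g -> g *m h0 = h0 *m g.
Proof.
move=> two0 m0 Hh0 uh0 ha conn g [ug hg].
have [c hc] := hg h0 Hh0.
case: (sign_pm m0 ug uh0 ha hc) => c1; first by rewrite hc c1 scale1r.
exfalso; apply: conn.
exists (fun A => A \in unitmx /\ A *m h0 = 1 *: (h0 *m A)),
       (fun A => A \in unitmx /\ A *m h0 = (-1) *: (h0 *m A)); split.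
- split; exact: pclosed_comm.
- move=> A [uA hA]; have [d hd] := hA h0 Hh0.
  by case: (sign_pm m0 uA uh0 ha hd) => d1; [left|right]; rewrite -d1.
- exists 1%:M; split; first exact: pcent1.
  by split; [exact: unitmx1 | rewrite mulmx1 mul1mx scale1r].
- by exists g; split; [split | rewrite -c1].
- move=> A _ [uA e1] [_ e2].
  have : (h0 *m A) *+ 2 = 0.
    by rewrite mulr2n; apply/eqP; rewrite addr_eq0 -scaleN1r -e2 e1 scale1r.
  move/eqP; rewrite -scaler_nat scaler_eq0 (negbTE two0) /=.
  by apply/negP; apply: unit_neq0 m0 _; rewrite unitmx_mul uh0.
Qed.

End Cl.

Section Mx.
Variable K : fieldType.

Lemma Amx2 r s : Amx K r s *m Amx K r s = 1%:M.
Proof.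
apply/matrixP => x y; rewrite !mxE (bigD1 x) //= big1 => [|z zx]; last first.
  by rewrite !mxE eq_sym (negbTE zx) mul0r.
rewrite !mxE eqxx addr0; case: eqP => [_|_]; last by rewrite mulr0.
by rewrite -exprD -signr_odd oddD addbb expr0.
Qed.

Lemma BA r i j : Bmx K r j *m Amx K r i = (-1) ^+ (i == j)%N *: (Amx K r i *m Bmx K r j).
Proof.
apply/matrixP => x y; rewrite !mxE (bigD1 y) //= big1 => [|z zy]; last first.
  by rewrite !mxE (negbTE zy) mulr0.
rewrite (bigD1 x) //= big1 => [|z zx]; last by rewrite !mxE eq_sym (negbTE zx) mul0r.
rewrite !mxE !eqxx !addr0.
case: eqP => [e|_]; last by rewrite !mul0r !mulr0.
by rewrite mul1r mulr1 -e -signr_odd sigma_odd signr_addb signr_odd.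
Qed.

Lemma Bmx2 r j : (j < r)%N -> Bmx K r j *m Bmx K r j = 1%:M.
Proof.
move=> jr; apply/matrixP => x y.
have sl : (sigma_idx j x < 2 ^ r)%N by apply: sigma_lt.
rewrite !mxE (bigD1 (Ordinal sl)) //= big1 => [|z zx]; last first.
  rewrite !mxE; case: eqP => [e|]; last by rewrite mul0r.
  by move: zx; rewrite -val_eqE /= e eqxx.
rewrite !mxE eqxx mul1r addr0 sigma_inv val_eqE; by case: (x == y).
Qed.

Lemma tensZr m n p q (M : 'M[K]_(m, n)) (N : 'M[K]_(p, q)) c :
  M *t (c *: N) = c *: (M *t N).
Proof. by apply/matrixP => i j; rewrite !mxE mulrCA. Qed.

Lemma tensZl m n p q (M : 'M[K]_(m, n)) (N : 'M[K]_(p, q)) c :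
  (c *: M) *t N = c *: (M *t N).
Proof. by apply/matrixP => i j; rewrite !mxE mulrA. Qed.

Lemma tens11 m q : (1%:M : 'M[K]_m) *t (1%:M : 'M[K]_q) = 1%:M.
Proof.
apply/matrixP => x y; case: (mxtens_indexP x) => a l; case: (mxtens_indexP y) => b l'.
rewrite tensmxE !mxE (inj_eq (can_inj (@mxtens_indexK _ _))) xpair_eqE.
by case: (a == b); case: (l == l'); rewrite ?mulr1 ?mulr0 ?mul0r.
Qed.

Lemma tensc m q (c : K) : (c%:M : 'M[K]_m) *t (1%:M : 'M[K]_q) = c%:M.
Proof. have -> : (c%:M : 'M[K]_m) = c *: 1%:M by rewrite scalemx1. by rewrite tensZl tens11 scalemx1. Qed.

Lemma Abar2 k r s : Abar K k r s *m Abar K k r s = 1%:M.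
Proof. by rewrite /Abar tensmx_mul mul1mx Amx2 tens11. Qed.

Lemma Bbar2 k r j : (j < r)%N -> Bbar K k r j *m Bbar K k r j = 1%:M.
Proof. by move=> jr; rewrite /Bbar tensmx_mul mul1mx Bmx2 // tens11. Qed.

Lemma BbarA k r i j :
  Bbar K k r j *m Abar K k r i = (-1) ^+ (i == j)%N *: (Abar K k r i *m Bbar K k r j).
Proof. by rewrite /Bbar /Abar !tensmx_mul !mul1mx BA tensZr. Qed.

Lemma AbarH k r i (h : 'M[K]_k) :
  Abar K k r i *m (h *t 1%:M) = (h *t 1%:M) *m Abar K k r i.
Proof. by rewrite /Abar !tensmx_mul mul1mx mulmx1 mul1mx mulmx1. Qed.

Lemma BbarH k r i (h : 'M[K]_k) :
  Bbar K k r i *m (h *t 1%:M) = (h *t 1%:M) *m Bbar K k r i.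
Proof. by rewrite /Bbar !tensmx_mul mul1mx mulmx1 mul1mx mulmx1. Qed.

Lemma Abar_unit k r i : Abar K k r i \in unitmx.
Proof. by case: (mulmx1_unit (Abar2 k r i)). Qed.

Lemma Bbar_unit k r j : (j < r)%N -> Bbar K k r j \in unitmx.
Proof. by move=> jr; case: (mulmx1_unit (Bbar2 k jr)). Qed.

Lemma Abar_diag k r i : Abar K k r i =
  diag_mx (\row_w (-1) ^+ ((mxtens_unindex w).2 %/ 2 ^ i)%N).
Proof.
apply/matrixP => x y; case: (mxtens_indexP x) => a l; case: (mxtens_indexP y) => b l'.
rewrite /Abar tensmxE !mxE mxtens_indexK /= (inj_eq (can_inj (@mxtens_indexK _ _))) xpair_eqE.
by case: (a == b); case: (l =P l') => [->|_]; rewrite ?mulr1 ?mulr0 ?mul0r ?mul1r.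
Qed.

Lemma sum_tens k N (F : 'I_(k * N) -> K) :
  \sum_w F w = \sum_a \sum_l F (mxtens_index (a, l)).
Proof.
rewrite pair_big /= (reindex (@mxtens_index k N)) /=.
  by apply: eq_bigr => -[a l].
by exists (@mxtens_unindex k N) => w _; [rewrite mxtens_indexK | rewrite mxtens_unindexK].
Qed.

End Mx.

Section Blk.
Variable K : fieldType.
Variables k r : nat.

Lemma negself (x : K) : 2%:R != 0 :> K -> x = - x -> x = 0.
Proof.
move=> h2 e; have : x *+ 2 = 0 by rewrite mulr2n {1}e addNr.
by rewrite -mulr_natl => /eqP; rewrite mulf_eq0 (negbTE h2) /= => /eqP.
Qed.

Lemma block_zero (M : 'M[K]_(k * 2 ^ r)) : 2%:R != 0 :> K ->
  (forall i, (i < r)%N -> M *m Abar K k r i = Abar K k r i *m M) ->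
  forall a b (l l' : 'I_(2 ^ r)), l != l' ->
  M (mxtens_index (a, l)) (mxtens_index (b, l')) = 0.
Proof.
move=> h2 hM a b l l' nl.
have /existsP [i hi] : [exists i : 'I_r, odd (l %/ 2 ^ i) != odd (l' %/ 2 ^ i)].
  rewrite -negb_forall; apply/negP => /forallP h; move/eqP: nl; apply; apply: val_inj.
  apply: (bits_eq (ltn_ord l) (ltn_ord l')) => j jr.
  exact/eqP/(h (Ordinal jr)).
have := congr1 (fun X : 'M[K]_(k * 2 ^ r) => X (mxtens_index (a, l)) (mxtens_index (b, l'))) (hM i (ltn_ord i)).
rewrite Abar_diag mul_mx_diag mul_diag_mx !mxE !mxtens_indexK; set w := M _ _.
clearbody w; have -> : (b, l').2 = l' by []. have -> : (a, l).2 = l by [].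
rewrite -[(-1) ^+ (l' %/ _)]signr_odd -[(-1) ^+ (l %/ _)]signr_odd.
move: hi; case: (odd (l %/ 2 ^ i)); case: (odd (l' %/ 2 ^ i)) => // _;
  rewrite ?expr0 ?expr1 ?mulr1 ?mul1r ?mulrN1 ?mulN1r => e; apply: negself h2 _.
- by [].
- by rewrite -e opprK.
Qed.

Variable l0 : 'I_(2 ^ r).

Definition compr (M : 'M[K]_(k * 2 ^ r)) : 'M[K]_k :=
  \matrix_(a, b) M (mxtens_index (a, l0)) (mxtens_index (b, l0)).

Lemma comp_mul (M N : 'M[K]_(k * 2 ^ r)) :
  (forall a z b l, l != l0 -> M (mxtens_index (a, l0)) (mxtens_index (z, l)) *
                              N (mxtens_index (z, l)) (mxtens_index (b, l0)) = 0) ->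
  compr (M *m N) = compr M *m compr N.
Proof.
move=> H; apply/matrixP => a b; rewrite !mxE sum_tens; apply: eq_bigr => z _.
by rewrite (bigD1 l0) //= big1 ?addr0 ?mxE // => l hl; apply: H.
Qed.

Lemma comp_tens (h : 'M[K]_k) : compr (h *t 1%:M) = h.
Proof. by apply/matrixP => a b; rewrite mxE tensmxE mxE eqxx mulr1. Qed.

Lemma comp1 : compr 1%:M = 1%:M.
Proof. by rewrite -(tens11 K k (2 ^ r)) comp_tens. Qed.

Lemma compZ c M : compr (c *: M) = c *: compr M.
Proof. by apply/matrixP => a b; rewrite !mxE. Qed.

Lemma tens_row0 (h : 'M[K]_k) a z l : l != l0 ->
  (h *t 1%:M) (mxtens_index (a, l0)) (mxtens_index (z, l)) = 0 :> K.
Proof. by move=> hl; rewrite tensmxE mxE eq_sym (negbTE hl) mulr0. Qed.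

End Blk.

Section Bp.
Variable K : fieldType.
Variables k r : nat.

Definition Bprod (l : seq nat) : 'M[K]_(k * 2 ^ r) :=
  foldr (fun j acc => Bbar K k r j *m acc) 1%:M l.

Lemma Bprod_A l i : Bprod l *m Abar K k r i =
  (-1) ^+ (count_mem i l) *: (Abar K k r i *m Bprod l).
Proof.
elim: l => [|j l IH] /=; first by rewrite mul1mx mulmx1 expr0 scale1r.
rewrite -mulmxA IH -scalemxAr [Bbar _ _ _ _ *m (_ *m _)]mulmxA BbarA -scalemxAl scalerA -exprD.
by rewrite eq_sym addnC mulmxA.
Qed.

Lemma Bprod_gen l : all (fun j => j < r)%N l ->
  gen_grp (fun x => exists s', (s' < r)%N /\ x = Bbar K k r s') (Bprod l).
Proof.
elim: l => [|j l IH] /=; first by move=> _; exact: gen_one.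
by case/andP => jr al; apply: (gen_mul (gen_in _) (IH al)); exists j.
Qed.

Lemma Bprod_unit l : all (fun j => j < r)%N l -> Bprod l \in unitmx.
Proof.
elim: l => [|j l IH] /=; first by move=> _; exact: unitmx1.
by case/andP => jr al; rewrite unitmx_mul Bbar_unit // IH.
Qed.

End Bp.

Unset Implicit Arguments.

Lemma gen_mono (K : fieldType) m (S T : 'M[K]_m -> Prop) x :
  (forall y, S y -> T y) -> gen_grp S x -> gen_grp T x.
Proof.
move=> ST; elim=> {x} [x /ST|| x y _ hx _ hy| x _ hx].
- exact: gen_in.
- exact: gen_one.
- exact: gen_mul.
- exact: gen_inv.
Qed.

Lemma line_comm (K : fieldType) m (y X : 'M[K]_m) t : y *m X = X *m y ->
  (1%:M + t *: (y - 1%:M)) *m X = X *m (1%:M + t *: (y - 1%:M)).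
Proof.
move=> e; rewrite mulmxDl mulmxDr mul1mx mulmx1 -scalemxAl -scalemxAr.
by rewrite mulmxBl mulmxBr mul1mx mulmx1 e.
Qed.

Lemma two_neq0 (K : fieldType) : ~~ (2 \in [pchar K]) -> 2%:R != 0 :> K.
Proof. by rewrite inE /=. Qed.

Theorem theorem4p10 (K : closedFieldType) (hK : ~~ (2 \in [pchar K]))
  (s t r k : nat) (ht : odd t) (hs : (1 <= s)%N) (ht1 : (1 <= t)%N)
  (hr1 : (1 <= r)%N) (hrs : (r <= s)%N) (hn : (k * 2 ^ r = 2 ^ s * t)%N)
  (Hpre : 'M[K]_k -> Prop) (hH : is_pgl_subgroup Hpre)
  (hHcases : pgl_trivial Hpre \/
             [/\ pgl_elem_ab2 Hpre, pgl_toral Hpre & pconnected (pcent Hpre)]) :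
  let C := pcent (@Dpre K k r Hpre) in
  let C0 := pidcomp C in
  (forall g, C g <->
     gen_grp (fun x => C0 x \/ exists s', (s' < r)%N /\ x = Bbar K k r s') g)
  /\
  (forall g, C g <->
     exists c b, [/\ C0 c,
                     gen_grp (fun x => exists s', (s' < r)%N /\ x = Bbar K k r s') b
                   & g = c *m b]).
Proof.
move=> C C0.
have two0 := @two_neq0 K hK.
have st0 : (0 < 2 ^ s * t)%N by rewrite muln_gt0 expn_gt0 ht1.
have n0 : (0 < k * 2 ^ r)%N by rewrite hn.
have k0 : (0 < k)%N by move: n0; rewrite muln_gt0 => /andP [].
case: hH => Hunit H1 Hmul Hinv Hscal.
pose Bset := fun x : 'M[K]_(k * 2 ^ r) => exists s', (s' < r)%N /\ x = Bbar K k r s'.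
have DA : forall i, (i < r)%N -> @Dpre K k r Hpre (Abar K k r i).
  by move=> i ir; apply: gen_in; right; left; exists i.
have DH : forall h, Hpre h -> @Dpre K k r Hpre (h *t 1%:M).
  by move=> h Hh; apply: gen_in; right; right; exists h.
have BC : forall j, (j < r)%N -> C (Bbar K k r j).
  move=> j jr; split; first exact: Bbar_unit.
  apply: ucomm_gen; first exact: Bbar_unit.
  move=> x [[c [_ ->]]|[[s' [_ ->]]|[h [_ ->]]]].
  - by exists 1; rewrite scale1r scalar_mxC.
  - by exists ((-1) ^+ (s' == j)%N); rewrite BbarA.
  - by exists 1; rewrite scale1r BbarH.
have genBC : forall b, gen_grp Bset b -> C b.
  move=> b; elim=> {b} [b [j [jr ->]]| |x y _ hx _ hy|x _ hx].
  - exact: BC.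
  - exact: pcent1.
  - exact: pcent_mul.
  - exact: pcent_inv.
have C0C : forall x, C0 x -> C x by move=> x [Y [_ sub _ _ Yx]]; apply: sub.
have decomp : forall g, C g -> exists c b, [/\ C0 c, gen_grp Bset b & g = c *m b].
  move=> g [ug hg].
  pose l := [seq j <- iota 0 r | g *m Abar K k r j != Abar K k r j *m g].
  have lr : all (fun j => (j < r)%N) l.
    by apply/allP => j; rewrite mem_filter mem_iota add0n => /andP [_ /andP [_ ->]].
  have ul : uniq l by rewrite filter_uniq // iota_uniq.
  pose b := Bprod K k r l.
  have ub : b \in unitmx by exact: Bprod_unit.
  have gb : gen_grp Bset b by exact: Bprod_gen.
  have gAe : forall i, (i < r)%N ->
      g *m Abar K k r i = (-1) ^+ (count_mem i l) *: (Abar K k r i *m g).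
    move=> i ir; rewrite count_uniq_mem // mem_filter mem_iota add0n ir andbT /=.
    have [e|ne] := eqVneq (g *m Abar K k r i) (Abar K k r i *m g).
      by rewrite e /= expr0 scale1r.
    rewrite /= ?leq0n expr1.
    have [c hc] := hg _ (DA i ir).
    case: (sign_pm n0 ug (Abar_unit K k r i) (Abar2 K k r i) hc) => c1.
      by move: ne; rewrite hc c1 scale1r eqxx.
    by rewrite hc c1.
  pose c' := g *m invmx b.
  have gdec : g = c' *m b by rewrite /c' -mulmxA mulVmx // mulmx1.
  have Cc' : C c' by apply: pcent_mul; [split | apply: pcent_inv; apply: genBC].
  have c'A : forall i, (i < r)%N -> c' *m Abar K k r i = Abar K k r i *m c'.
    move=> i ir; set e := (-1) ^+ (count_mem i l) : K.
    have ee : e * e = 1 by rewrite /e -exprD -signr_odd oddD addbb.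
    have bA := Bprod_A K k r l i; rewrite -/b -/e in bA.
    have h1 : Abar K k r i *m invmx b = e *: (invmx b *m Abar K k r i).
      rewrite -{1}(mul1mx (Abar K k r i)) -(mulVmx ub) -(mulmxA (invmx b) b) bA.
      by rewrite -scalemxAr -scalemxAl -!mulmxA mulmxV // mulmx1.
    have iA : invmx b *m Abar K k r i = e *: (Abar K k r i *m invmx b).
      by rewrite h1 scalerA ee scale1r.
    rewrite /c' -mulmxA iA -scalemxAr [g *m (_ *m _)]mulmxA gAe // -scalemxAl.
    by rewrite scalerA ee scale1r mulmxA.
  have hc'H : forall h, Hpre h ->
      exists chi, c' *m (h *t 1%:M) = chi *: ((h *t 1%:M) *m c').
    by move=> h Hh; apply: (Cc'.2 _ (DH h Hh)).
  have uc' : c' \in unitmx by case: Cc'.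
  have c'H : forall h, Hpre h -> c' *m (h *t 1%:M) = (h *t 1%:M) *m c'.
    case: hHcases => [triv|[[_ sq] _ conn]] h Hh.
      by have [a ->] := triv h Hh; rewrite tensc scalar_mxC.
    have l0lt : (0 < 2 ^ r)%N by rewrite expn_gt0.
    pose l0 : 'I_(2 ^ r) := Ordinal l0lt.
    have blk := block_zero two0 c'A.
    have hypM : forall (N : 'M[K]_(k * 2 ^ r)) a z b0 (ll : 'I_(2 ^ r)), ll != l0 ->
        c' (mxtens_index (a, l0)) (mxtens_index (z, ll)) *
        N (mxtens_index (z, ll)) (mxtens_index (b0, l0)) = 0.
      by move=> N a z b0 ll hl; rewrite blk ?mul0r // eq_sym.
    have hypH : forall (h0 : 'M[K]_k) (N : 'M[K]_(k * 2 ^ r)) a z b0 (ll : 'I_(2 ^ r)),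
        ll != l0 ->
        (h0 *t 1%:M) (mxtens_index (a, l0)) (mxtens_index (z, ll)) *
        N (mxtens_index (z, ll)) (mxtens_index (b0, l0)) = 0.
      by move=> h0 N a z b0 ll hl; rewrite tens_row0 ?mul0r.
    have ucomp : compr l0 c' \in unitmx.
      have e := comp_mul (hypM (invmx c')); rewrite mulmxV // comp1 in e.
      by case: (mulmx1_unit (esym e)).
    have compH : forall h0 chi, c' *m (h0 *t 1%:M) = chi *: ((h0 *t 1%:M) *m c') ->
        compr l0 c' *m h0 = chi *: (h0 *m compr l0 c').
      move=> h0 chi e; have := congr1 (compr l0) e.
      by rewrite compZ (comp_mul (hypM _)) (comp_mul (hypH h0 _)) comp_tens.
    have pc : pcent Hpre (compr l0 c').
      split => // h0 Hh0; have [chi e] := hc'H h0 Hh0; exists chi; exact: compH e.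
    have [a ha] := sq h Hh.
    have hc := pcent_comm two0 k0 Hh (Hunit h Hh) ha conn pc.
    have [chi e] := hc'H h Hh.
    have e2 := compH h chi e; rewrite hc in e2.
    have : (1 - chi) *: (h *m compr l0 c') = 0 by rewrite scalerBl scale1r {1}e2 subrr.
    move/eqP; rewrite scaler_eq0 (negbTE (unit_neq0 k0 _)) ?orbF; last first.
      by rewrite unitmx_mul Hunit.
    by rewrite subr_eq0 => /eqP chi1; rewrite e -chi1 scale1r.
  pose Y := fun x : 'M[K]_(k * 2 ^ r) =>
    [/\ x \in unitmx, forall i, (i < r)%N -> x *m Abar K k r i = Abar K k r i *m x
      & forall h, Hpre h -> x *m (h *t 1%:M) = (h *t 1%:M) *m x].
  have Y1 : Y 1%:M.
    split; [exact: unitmx1 | by move=> *; rewrite mul1mx mulmx1 | by move=> *; rewrite mul1mx mulmx1].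
  exists c', b; split => //.
  exists Y; split.
  - move=> c x c0 [ux xA xH]; split.
    + by rewrite unitmxZ ?unitfE.
    + by move=> i ir; rewrite -scalemxAl xA // -scalemxAr.
    + by move=> h Hh; rewrite -scalemxAl xH // -scalemxAr.
  - move=> x [ux xA xH]; split => // z Dz; exists 1; rewrite scale1r.
    apply: (comm_gen _ Dz) => w [[c [_ ->]]|[[s' [sr ->]]|[h [Hh ->]]]].
    + exact: scalar_mxC.
    + exact: xA.
    + exact: xH.
  - exact: Y1.
  - apply: line_conn => //; first by move=> y [].
    move=> y t0 [uy yA yH] u; split => //.
    + by move=> i ir; apply: line_comm; apply: yA.
    + by move=> h Hh; apply: line_comm; apply: yH.
  - by split.
split => g; split.
- move=> /decomp [c [b [C0c gb ->]]].
  apply: gen_mul; first by apply: gen_in; left.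
  by apply: gen_mono gb => y hy; right.
- elim=> {g} [x [/C0C //|[j [jr ->]]]| |x y _ hx _ hy|x _ hx].
  + exact: BC.
  + exact: pcent1.
  + exact: pcent_mul.
  + exact: pcent_inv.
- exact: decomp.
- by move=> [c [b [h1 h2 ->]]]; apply: pcent_mul (C0C _ h1) (genBC _ h2).
Qed.
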